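(* Let $R$ be a discrete valuation ring with maximal ideal $\mathfrak{m}$, and let $M$ be an $R$-module with $M\cong\bigoplus_{1\le i\le n}R/\mathfrak{m}^{k_i}$, where $k_1\ge\cdots\ge k_n$ are non-negative integers. Let $N$ be a quotient of $M$ generated by $j$ elements, where $j\le n$. Then the length satisfies $l(N)\le k_1+\cdots+k_j$. Moreover, if equality holds, then $N$ is a direct summand of $M$. *)

(* Defs.v *)
From HB Require Import structures.
From mathcomp Require Import all_boot all_order all_algebra.
Set Implicit Arguments. Unset Strict Implicit. Unset Printing Implicit Defensive.
Import GRing.Theory.
Local Open Scope ring_scope.

Definition is_dvr (R : idomainType) : Prop :=
  exists pi : R, pi != 0 /\ pi \isn't a GRing.unit /\
    forall x : R, x != 0 ->
      exists (u : R) (n : nat), u \is a GRing.unit /\ x = u * pi ^+ n.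

Definition max_ideal (R : idomainType) : R -> Prop :=
  fun x => x \isn't a GRing.unit.

Definition ideal_pow (R : idomainType) (I : R -> Prop) (k : nat) : R -> Prop :=
  fun x => exists s : seq (R * k.-tuple R),
    (forall t, t \in s -> forall r, r \in tval t.2 -> I r) /\
    x = \sum_(t <- s) (t.1 * \prod_(r <- tval t.2) r).

Definition is_submod (R : idomainType) (M : lmodType R) (S : M -> Prop) : Prop :=
  S 0 /\ forall (a : R) (x y : M), S x -> S y -> S (a *: x + y).

Definition strict_sub (T : Type) (S S' : T -> Prop) : Prop :=
  (forall x, S x -> S' x) /\ exists x, S' x /\ ~ S x.

Definition submod_chain (R : idomainType) (M : lmodType R)
    (S : nat -> M -> Prop) (r : nat) : Prop :=
  (forall i, (i <= r)%N -> is_submod (S i)) /\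
  (forall i, (i < r)%N -> strict_sub (S i) (S i.+1)).

Definition length_le (R : idomainType) (M : lmodType R) (l : nat) : Prop :=
  forall S r, @submod_chain R M S r -> (r <= l)%N.

Definition has_length (R : idomainType) (M : lmodType R) (l : nat) : Prop :=
  length_le M l /\ exists S, @submod_chain R M S l.

(* M is isomorphic to the direct sum of R/I^{k_i}, i < n, witnessed by
   e : 'I_n -> M (e i = image of 1 in the i-th summand). *)
Definition is_sum_of_cyclics (R : idomainType) (M : lmodType R)
    (I : R -> Prop) (n : nat) (k : 'I_n -> nat) : Prop :=
  exists e : 'I_n -> M,
    (forall x : M, exists a : 'I_n -> R, x = \sum_(i < n) a i *: e i) /\
    (forall a : 'I_n -> R,
        \sum_(i < n) a i *: e i = 0 <-> forall i, ideal_pow I (k i) (a i)).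

Definition generated_by (R : idomainType) (N : lmodType R) (j : nat) : Prop :=
  exists g : 'I_j -> N, forall y : N,
    exists a : 'I_j -> R, y = \sum_(i < j) a i *: g i.

(* The quotient N of M via the surjection f is a direct summand of M:
   ker f has a complementary submodule C (so C ~ N and M = C (+) ker f). *)
Definition quotient_is_summand (R : idomainType) (M N : lmodType R)
    (f : M -> N) : Prop :=
  exists C : M -> Prop, is_submod C /\
    (forall x, C x -> f x = 0 -> x = 0) /\
    (forall x, exists c y, C c /\ f y = 0 /\ x = c + y).

(* Main.v *)
Require Import Defs.
From HB Require Import structures.
From mathcomp Require Import all_boot all_order all_algebra.
From mathcomp Require Import ring.
From Stdlib Require Import Classical ClassicalEpsilon.
Import GRing.Theory.
Local Open Scope ring_scope.

Module P1.
Set Warnings "-notation-overridden,-ambiguous-paths,-parsing".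
Set Implicit Arguments. Unset Strict Implicit. Unset Printing Implicit Defensive.

Import GRing.Theory.
Local Open Scope ring_scope.

Definition sb (P : Prop) : bool :=
  if excluded_middle_informative P then true else false.
Lemma sbP (P : Prop) : reflect P (sb P).
Proof. rewrite /sb; case: excluded_middle_informative => h; by constructor. Qed.

Section Len.
Variables (R : idomainType) (M : lmodType R).
Local Notation is_submod := (@is_submod R M).

Definition sub (A B : M -> Prop) := forall x, A x -> B x.
Definition cap (A B : M -> Prop) x := A x /\ B x.
Definition plus (A B : M -> Prop) x := exists a b, A a /\ B b /\ x = a + b.
Definition between (A B : M -> Prop) (S : nat -> M -> Prop) r :=
  (forall i, (i <= r)%N -> is_submod (S i) /\ sub A (S i) /\ sub (S i) B) /\
  (forall i, (i < r)%N -> sub (S i) (S i.+1)).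
Definition step (S : nat -> M -> Prop) i := exists x, S i.+1 x /\ ~ S i x.
Definition steps S r := (\sum_(i < r) sb (step S i))%N.
Definition rlen A B l := forall S r, between A B S r -> (steps S r <= l)%N.

Lemma sm0 S : is_submod S -> S 0. Proof. by case. Qed.
Lemma smD S x y : is_submod S -> S x -> S y -> S (x + y).
Proof. by case=> _ h hx hy; have := h 1 x y hx hy; rewrite scale1r. Qed.
Lemma smZ S a x : is_submod S -> S x -> S (a *: x).
Proof. by move=> hS hx; have := proj2 hS a x 0 hx (sm0 hS); rewrite addr0. Qed.
Lemma smN S x : is_submod S -> S x -> S (- x).
Proof. by move=> hS hx; rewrite -scaleN1r; apply: smZ. Qed.
Lemma smB S x y : is_submod S -> S x -> S y -> S (x - y).
Proof. by move=> hS hx hy; apply: smD => //; apply: smN. Qed.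
Lemma smsum S (I : finType) (P : pred I) (F : I -> M) :
  is_submod S -> (forall i, P i -> S (F i)) -> S (\sum_(i | P i) F i).
Proof.
move=> hS hF; apply: (big_ind S) => //; first exact: sm0.
  by move=> ??; apply: smD.
Qed.

Lemma cap_submod A B : is_submod A -> is_submod B -> is_submod (cap A B).
Proof.
move=> hA hB; split; first by split; apply: sm0.
by move=> a x y [??] [??]; split; apply hA || apply hB.
Qed.
Lemma plus_submod A B : is_submod A -> is_submod B -> is_submod (plus A B).
Proof.
move=> hA hB; split; first by exists 0, 0; rewrite addr0; split; [apply: sm0|split=>//; apply: sm0].
move=> c x y [a [b [ha [hb ->]]]] [a' [b' [ha' [hb' ->]]]].
exists (c *: a + a'), (c *: b + b'); split; first by apply hA.
split; first by apply hB.
by rewrite scalerDr; rewrite -!addrA; congr (_ + _); rewrite addrC -!addrA; congr (_ + _); rewrite addrC.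
Qed.

Lemma between_mono A B S r i i' : between A B S r -> (i <= i')%N -> (i' <= r)%N ->
  sub (S i) (S i').
Proof.
move=> [_ hm] hii'; elim: i' hii' => [|i' IH].
  by rewrite leqn0 => /eqP -> _ x.
rewrite leq_eqVlt => /orP []; first by move=> /eqP -> _ x.
move=> hlt hr x hx.
apply: (hm i' hr); exact: (IH hlt (ltnW hr) x hx).
Qed.

Lemma rlen_mono A B l l' : rlen A B l -> (l <= l')%N -> rlen A B l'.
Proof. by move=> h hl S r hS; apply: leq_trans (h S r hS) hl. Qed.

Lemma rlen_conv A A' B B' l : sub A' A -> sub B B' -> rlen A' B' l -> rlen A B l.
Proof.
move=> hA hB h S r [h1 h2]; apply: h; split => // i hi.
have [? [? ?]] := h1 i hi; split => //; split => x hx; auto.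
Qed.

Lemma steps0 S r : (forall i, (i < r)%N -> ~ step S i) -> steps S r = 0%N.
Proof.
move=> h; rewrite /steps big1 // => i _; case: sbP => // hs.
by case: (h i (ltn_ord i) hs).
Qed.

Lemma rlen0 A B : sub B A -> rlen A B 0.
Proof.
move=> hBA S r [h1 h2]; rewrite steps0 // => i hi [x [hx hnx]].
apply: hnx; have [_ [h3 _]] := h1 i (ltnW hi); apply: h3; apply: hBA.
by have [_ [_ h4]] := h1 i.+1 hi; apply: h4.
Qed.

Lemma steps_le S S1 S2 r :
  (forall i, (i < r)%N -> step S i -> step S1 i \/ step S2 i) ->
  (steps S r <= steps S1 r + steps S2 r)%N.
Proof.
move=> h; rewrite /steps -big_split /=; apply: leq_sum => i _.
case: (sbP (step S i)) => // hs.
by case: (h i (ltn_ord i) hs) => [/sbP -> | /sbP ->]; rewrite ?addnS.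
Qed.

Lemma steps_mono S S1 r :
  (forall i, (i < r)%N -> step S i -> step S1 i) -> (steps S r <= steps S1 r)%N.
Proof.
move=> h; rewrite /steps; apply: leq_sum => i _.
by case: (sbP (step S i)) => // hs; have /sbP -> := h i (ltn_ord i) hs.
Qed.

Lemma step_split A B C S r i : is_submod C -> between A B S r -> (i < r)%N ->
  step S i -> step (fun i => cap (S i) C) i \/ step (fun i => plus (S i) C) i.
Proof.
move=> hC [h1 h2] hi [x [hx hnx]].
  case: (classic (step (fun i => plus (S i) C) i)) => hp; [by right|left].
  have : plus (S i.+1) C x by exists x, 0; rewrite addr0; split=>//; split=>//; apply: sm0.
  move=> hx1.
  have [s [c [hs [hc hxe]]]] : plus (S i) C x.
    by apply: NNPP => hn; apply: hp; exists x; split.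
  exists c; split; [split=>//|].
    have -> : c = x - s by rewrite hxe addrC addKr.
    apply: smB => //; first by have [? _] := h1 i.+1 hi.
    by apply: (h2 i hi).
  by move=> [hcs _]; apply: hnx; rewrite hxe; apply: smD => //; have [? _] := h1 i (ltnW hi).
Qed.

Lemma rlen_add A C B a b : sub A C -> sub C B -> is_submod C -> is_submod B ->
  rlen A C a -> rlen C B b -> rlen A B (a + b).
Proof.
move=> hAC hCB hC hB hA1 hA2 S r hS.
have [h1 h2] := hS.
apply: leq_trans (steps_le (S1 := fun i => cap (S i) C)
   (S2 := fun i => plus (S i) C) _) _.
  by move=> i hi; apply: (step_split hC hS).
apply: leq_add.
  apply: hA1; split.
    move=> i hi; have [hs [hAs hsB]] := h1 i hi; split; first exact: cap_submod.
    by split => x hx; [split; auto | case: hx].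
  by move=> i hi x [hx hc]; split => //; apply: h2.
apply: hA2; split.
  move=> i hi; have [hs [hAs hsB]] := h1 i hi; split; first exact: plus_submod.
  split => x.
    by move=> hx; exists 0, x; rewrite add0r; split; [apply: sm0|].
  by move=> [s [c [hs' [hc ->]]]]; apply: smD => //; auto.
by move=> i hi x [s [c [hs' [hc ->]]]]; exists s, c; split => //; apply: h2.
Qed.

Lemma sum_le1 r (b : nat -> bool) :
  (forall i i', (i < i')%N -> (i' < r)%N -> b i -> ~~ b i') ->
  (\sum_(i < r) b i <= 1)%N.
Proof.
elim: r => [|r IH] h; first by rewrite big_ord0.
rewrite big_ord_recr /=.
case hb: (b r).
  rewrite big1 // => i _; case bi: (b i) => //.
  by have := h i r (ltn_ord i) (ltnSn r) bi; rewrite hb.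
rewrite addn0; apply: IH => i i' hii' hi'; apply: h => //; exact: ltnW.
Qed.

End Len.

End P1.
Import P1.

Module P2.
Set Warnings "-notation-overridden,-ambiguous-paths,-parsing".
Set Implicit Arguments. Unset Strict Implicit. Unset Printing Implicit Defensive.
Import GRing.Theory.
Local Open Scope ring_scope.

Section DVR.
Variables (R : idomainType) (M : lmodType R) (p : R).
Hypothesis hdvr : forall a : R, a != 0 ->
  exists u v, u \is a GRing.unit /\ a = u * p ^+ v.
Local Notation is_submod := (@is_submod R M).
Local Notation sub := (@sub R M).
Local Notation plus := (@plus R M).
Local Notation cap := (@cap R M).
Local Notation rlen := (@rlen R M).
Local Notation between := (@between R M).
Local Notation steps := (@steps R M).
Local Notation step := (@step R M).

Lemma unit_or_p a : a \is a GRing.unit \/ exists b, a = b * p.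
Proof.
case: (eqVneq a 0) => [->|ha]; first by right; exists 0; rewrite mul0r.
have [u [[|v] [hu ->]]] := hdvr ha; first by left; rewrite expr0 mulr1.
by right; exists (u * p ^+ v); rewrite exprSr mulrA.
Qed.

Definition span m (Q : pred 'I_m) (g : 'I_m -> M) (x : M) :=
  exists a : 'I_m -> R, x = \sum_(l | Q l) a l *: g l.
Definition rg (g : M) (x : M) := exists c, x = c *: g.

Lemma span_submod m Q g : is_submod (@span m Q g).
Proof.
split; first by exists (fun _ => 0); rewrite big1 // => l _; rewrite scale0r.
move=> c x y [a ->] [b ->]; exists (fun l => c * a l + b l).
rewrite scaler_sumr -big_split /=; apply: eq_bigr => l _.
by rewrite scalerDl scalerA.
Qed.

Lemma rg_submod g : is_submod (rg g).
Proof.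
split; first by exists 0; rewrite scale0r.
by move=> c x y [a ->] [b ->]; exists (c * a + b); rewrite scalerDl scalerA.
Qed.

Lemma rlen_gen1 A B g : is_submod A -> A (p *: g) ->
  (forall x, B x -> exists a y, A y /\ x = y + a *: g) -> rlen A B 1.
Proof.
move=> hA hpg hB S r hS; have [h1 h2] := hS.
apply: (@sum_le1 r (fun i => sb (step S i))) => i i' hii' hi' /sbP [x [hx hnx]]; apply/negP => /sbP [z [hz hnz]].
have hir : (i < r)%N by apply: ltn_trans hi'.
have [hSi1 [hASi1 hSi1B]] := h1 i.+1 hir.
have [hSi [hASi hSiB]] := h1 i (ltnW hir).
have [a [y [hy hxe]]] := hB x (hSi1B x hx).
case: (unit_or_p a) => [ua | [b hb]].
  have hg : S i.+1 g.
    have -> : g = a^-1 *: (x - y) by rewrite hxe addrC addKr scalerA mulVr ?scale1r.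
    by apply: smZ => //; apply: smB => //; apply: hASi1.
  have [hSi' [hASi' hSi'B]] := h1 i' (ltnW hi').
  have [hSi'1 [_ hSi'1B]] := h1 i'.+1 hi'.
  have [a' [y' [hy' hze]]] := hB z (hSi'1B z hz).
  apply: hnz; rewrite hze; apply: smD => //; first by apply: hASi'.
  by apply: smZ => //; apply: (between_mono hS hii' (ltnW hi')).
apply: hnx; rewrite hxe; apply: smD => //; first by apply: hASi.
by apply: hASi; rewrite hb -scalerA; apply: smZ.
Qed.

End DVR.

End P2.
Import P2.

Module P3.
Set Warnings "-notation-overridden,-ambiguous-paths,-parsing".
Set Implicit Arguments. Unset Strict Implicit. Unset Printing Implicit Defensive.
Import GRing.Theory.
Local Open Scope ring_scope.

Section DVR2.
Variables (R : idomainType) (M : lmodType R) (p : R).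
Hypothesis hdvr : forall a : R, a != 0 ->
  exists u v, u \is a GRing.unit /\ a = u * p ^+ v.
Local Notation is_submod := (@Defs.is_submod R M).
Local Notation sub := (@P1.sub R M).
Local Notation plus := (@P1.plus R M).
Local Notation cap := (@P1.cap R M).
Local Notation rlen := (@P1.rlen R M).
Local Notation between := (@P1.between R M).
Local Notation steps := (@P1.steps R M).
Local Notation step := (@P1.step R M).
Local Notation span := (@P2.span R M).
Local Notation rg := (@P2.rg R M).

Lemma span_subset m (Q Q' : pred 'I_m) g : (forall l, Q' l -> Q l) ->
  sub (span Q' g) (span Q g).
Proof.
move=> hQ x [c ->]; exists (fun l => if Q' l then c l else 0).
rewrite [RHS]big_mkcond [LHS]big_mkcond /=; apply: eq_bigr => l _.
case hq: (Q' l); first by rewrite (hQ l hq).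
by case: (Q l); rewrite ?scale0r.
Qed.

Lemma span_D1 m (Q : pred 'I_m) g l0 x : Q l0 -> span Q g x ->
  exists c y, span [pred l | Q l && (l != l0)] g y /\ x = y + c *: g l0.
Proof.
move=> hl0 [c ->]; exists (c l0), (\sum_(l | Q l && (l != l0)) c l *: g l).
by split; [exists c | rewrite (bigD1 l0 hl0) /= addrC].
Qed.

Lemma sub_plusl A B : is_submod B -> sub A (plus A B).
Proof. by move=> hB x hx; exists x, 0; rewrite addr0; split => //; split => //; apply: sm0. Qed.
Lemma sub_plusr A B : is_submod A -> sub B (plus A B).
Proof. by move=> hA x hx; exists 0, x; rewrite add0r; split => //; apply: sm0. Qed.

Lemma rlen_gen A m (Q : pred 'I_m) g : is_submod A -> (forall l, Q l -> A (p *: g l)) ->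
  rlen A (plus A (span Q g)) (\sum_(l | Q l) 1)%N.
Proof.
move=> hA; move hN: (\sum_(l | Q l) 1)%N => N.
elim: N Q hN => [|N IH] Q hN hQ.
  apply: rlen0 => z [a [b [ha [[c ->] ->]]]]; rewrite big_pred0 ?addr0 //.
  move=> l; apply/negbTE/negP => Ql; move: hN; rewrite (bigD1 l Ql) /=.
  by rewrite add1n.
have [l0 Ql0] : exists l0, Q l0.
  apply: NNPP => hn; move: hN; rewrite big_pred0 // => l.
  by apply/negbTE/negP => Ql; apply: hn; exists l.
have hN' : (\sum_(l | Q l && (l != l0)) 1)%N = N.
  by move: hN; rewrite (bigD1 l0 Ql0) /= add1n => -[].
have h1 := IH [pred l | Q l && (l != l0)] hN' (fun l hl => hQ l (andP hl).1).
rewrite -addn1; apply: (rlen_add (C := plus A (span [pred l | Q l && (l != l0)] g))) => //.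
- by apply: sub_plusl; apply: span_submod.
- move=> x [a [b [ha [hb ->]]]]; exists a, b; split => //; split => //.
  by apply: (span_subset (Q' := [pred l | Q l && (l != l0)])) => // l /andP [].
- by apply: plus_submod => //; apply: span_submod.
- by apply: plus_submod => //; apply: span_submod.
apply: (rlen_gen1 hdvr (g := g l0)).
- by apply: plus_submod => //; apply: span_submod.
- by apply: sub_plusl; [apply: span_submod | apply: hQ].
move=> x [a [b [ha [hb ->]]]].
have [c [y [hy ->]]] := span_D1 Ql0 hb.
exists c, (a + y); split; first by exists a, y.
by rewrite addrA.
Qed.

Lemma rlen_cyc t A g : is_submod A -> A (p ^+ t *: g) -> rlen A (plus A (rg g)) t.
Proof.
elim: t g => [|t IH] g hA hg.
  apply: rlen0 => z [a [b [ha [[c ->] ->]]]]; apply: smD => //; apply: smZ => //.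
  by move: hg; rewrite expr0 scale1r.
rewrite -addn1; apply: (rlen_add (C := plus A (rg (p *: g)))) => //.
- by apply: sub_plusl; apply: rg_submod.
- move=> x [a [b [ha [[c ->] ->]]]]; exists a, ((c * p) *: g); split => //.
  by split; [exists (c * p) | rewrite scalerA].
- by apply: plus_submod => //; apply: rg_submod.
- by apply: plus_submod => //; apply: rg_submod.
- by apply: IH => //; rewrite scalerA -exprSr.
apply: (rlen_gen1 hdvr (g := g)).
- by apply: plus_submod => //; apply: rg_submod.
- by apply: sub_plusr => //; exists 1; rewrite scale1r.
move=> x [a [b [ha [[c ->] ->]]]]; exists c, a; split => //.
by apply: sub_plusl => //; apply: rg_submod.
Qed.

End DVR2.

End P3.
Import P3.

Module P4.
Set Warnings "-notation-overridden,-ambiguous-paths,-parsing".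
Set Implicit Arguments. Unset Strict Implicit. Unset Printing Implicit Defensive.
Import GRing.Theory.
Local Open Scope ring_scope.

Section DVR3.
Variables (R : idomainType) (M : lmodType R) (p : R).
Hypothesis hdvr : forall a : R, a != 0 ->
  exists u v, u \is a GRing.unit /\ a = u * p ^+ v.
Local Notation is_submod := (@Defs.is_submod R M).
Local Notation sub := (@P1.sub R M).
Local Notation plus := (@P1.plus R M).
Local Notation cap := (@P1.cap R M).
Local Notation rlen := (@P1.rlen R M).
Local Notation between := (@P1.between R M).
Local Notation steps := (@P1.steps R M).
Local Notation step := (@P1.step R M).
Local Notation span := (@P2.span R M).
Local Notation rg := (@P2.rg R M).


Definition pmul t (U : M -> Prop) x := exists y, U y /\ x = p ^+ t *: y.
Definition Nt K U t := plus K (pmul t U).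

Lemma pmul_submod t U : is_submod U -> is_submod (pmul t U).
Proof.
move=> hU; split; first by exists 0; rewrite scaler0; split => //; apply: sm0.
move=> a x y [x' [hx' ->]] [y' [hy' ->]]; exists (a *: x' + y'); split; first by apply hU.
by rewrite scalerDr !scalerA mulrC.
Qed.

Lemma Nt_submod K U t : is_submod K -> is_submod U -> is_submod (Nt K U t).
Proof. by move=> hK hU; apply: plus_submod => //; apply: pmul_submod. Qed.

Lemma sub_K_Nt K U t : is_submod U -> sub K (Nt K U t).
Proof. by move=> hU; apply: sub_plusl; apply: pmul_submod. Qed.

Lemma Nt_S K U t : is_submod U -> sub (Nt K U t.+1) (Nt K U t).
Proof.
move=> hU x [a [b [ha [[y [hy ->]] ->]]]]; exists a, (p ^+ t *: (p *: y)).
split => //; split; first by exists (p *: y); split => //; apply: smZ.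
by rewrite scalerA -exprSr.
Qed.

Lemma Nt_U K U t : is_submod U -> sub K U -> sub (Nt K U t) U.
Proof.
by move=> hU hKU x [a [b [ha [[y [hy ->]] ->]]]]; apply: smD => //; [apply: hKU | apply: smZ].
Qed.

Lemma rlen_layers K U B (l : nat -> nat) : is_submod K -> is_submod U -> sub K U ->
  (forall y, U y -> p ^+ B *: y = 0) ->
  (forall t, (t < B)%N -> rlen (Nt K U t.+1) (Nt K U t) (l t)) ->
  rlen K U (\sum_(t < B) l t)%N.
Proof.
move=> hK hU hKU hB hl.
have H : forall t, (t <= B)%N -> rlen (Nt K U t) U (\sum_(s < t) l s).
  elim=> [|t IH] ht.
    rewrite big_ord0; apply: rlen0 => y hy; exists 0, y; rewrite add0r.
    split; first exact: sm0.
    by split => //; exists y; rewrite expr0 scale1r.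
  rewrite big_ord_recr /= addnC.
  apply: (rlen_add (C := Nt K U t)) => //.
  - exact: Nt_S.
  - exact: Nt_U.
  - exact: Nt_submod.
  - by apply: hl.
  - by apply: IH; apply: ltnW.
apply: (rlen_conv (A' := Nt K U B) (B' := U)) => //; last exact: H.
move=> x [a [b [ha [[y [hy ->]] ->]]]]; by rewrite hB // addr0.
Qed.

Lemma lay_gen K U m (Q : pred 'I_m) x t : is_submod K -> is_submod U ->
  (forall l, Q l -> U (x l)) -> sub U (plus K (span Q x)) ->
  rlen (Nt K U t.+1) (Nt K U t) (\sum_(l | Q l) 1)%N.
Proof.
move=> hK hU hxU hUK.
apply: (rlen_conv (A' := Nt K U t.+1) (B' := plus (Nt K U t.+1) (span Q (fun l => p ^+ t *: x l)))) => //.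
  move=> z [a [b [ha [[y [hy ->]] ->]]]].
  have [k [s [hk [[c ->] ->]]]] := hUK y hy.
  exists (a + p ^+ t *: k), (\sum_(l | Q l) c l *: (p ^+ t *: x l)); split.
    by apply: (sub_K_Nt t.+1 hU); apply: smD => //; apply: smZ.
  split; first by exists c.
  rewrite scalerDr scaler_sumr addrA; congr (_ + _); apply: eq_bigr => l _.
  by rewrite !scalerA mulrC.
apply: (rlen_gen hdvr) => //; first exact: Nt_submod.
move=> l hl; exists 0, (p ^+ t.+1 *: x l); rewrite add0r; split; first exact: sm0.
by split => //; [exists (x l); split => //; apply: hxU | rewrite scalerA -exprS].
Qed.

End DVR3.

End P4.
Import P4.

Module P5.
Set Warnings "-notation-overridden,-ambiguous-paths,-parsing".
Set Implicit Arguments. Unset Strict Implicit. Unset Printing Implicit Defensive.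
Import GRing.Theory.
Local Open Scope ring_scope.

Section DVR4.
Variables (R : idomainType) (M : lmodType R) (p : R).
Hypothesis hdvr : forall a : R, a != 0 ->
  exists u v, u \is a GRing.unit /\ a = u * p ^+ v.
Local Notation is_submod := (@Defs.is_submod R M).
Local Notation sub := (@P1.sub R M).
Local Notation plus := (@P1.plus R M).
Local Notation cap := (@P1.cap R M).
Local Notation rlen := (@P1.rlen R M).
Local Notation between := (@P1.between R M).
Local Notation steps := (@P1.steps R M).
Local Notation step := (@P1.step R M).
Local Notation span := (@P2.span R M).
Local Notation rg := (@P2.rg R M).

Local Notation Nt := (@P4.Nt R M p).
Local Notation pmul := (@P4.pmul R M p).
Variables (n : nat) (e : 'I_n -> M) (k : 'I_n -> nat).
Hypothesis hk : forall i, p ^+ (k i) *: e i = 0.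

Lemma kill i s : (k i <= s)%N -> p ^+ s *: e i = 0.
Proof. by move=> hs; rewrite -(subnK hs) exprD -scalerA hk scaler0. Qed.

Lemma e_in_span (P : pred 'I_n) i : P i -> span P e (e i).
Proof.
move=> hi; exists (fun l => (l == i)%:R).
rewrite (bigD1 i) //= eqxx scale1r big1 ?addr0 // => l /andP [_ hl].
by rewrite (negbTE hl) scale0r.
Qed.

Lemma span_kill (P : pred 'I_n) s y : (forall i, P i -> (k i <= s)%N) ->
  span P e y -> p ^+ s *: y = 0.
Proof.
move=> hs [c ->]; rewrite scaler_sumr big1 // => i hi.
by rewrite scalerA mulrC -scalerA kill ?scaler0 // hs.
Qed.

Lemma lay_e K (P : pred 'I_n) t : is_submod K ->
  rlen (Nt K (span P e) t.+1) (Nt K (span P e) t) (\sum_(i | P i && (t < k i)%N) 1)%N.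
Proof.
move=> hK; have hU := span_submod P e.
apply: (rlen_conv (A' := Nt K (span P e) t.+1)
  (B' := plus (Nt K (span P e) t.+1) (span [pred i | P i && (t < k i)%N] (fun i => p ^+ t *: e i)))) => //.
  move=> z [a [b [ha [[y [[c ->] ->]] ->]]]].
  exists a, (\sum_(i | P i && (t < k i)%N) c i *: (p ^+ t *: e i)); split.
    by apply: (sub_K_Nt p t.+1 hU).
  split; first by exists c.
  congr (_ + _); rewrite scaler_sumr (bigID (fun i => (t < k i)%N)) /=.
  rewrite [X in _ + X]big1 ?addr0.
    by apply: eq_bigr => i _; rewrite !scalerA mulrC.
  move=> i /andP [_ hi]; rewrite scalerA mulrC -scalerA kill ?scaler0 //.
  by rewrite leqNgt.
apply: (rlen_gen hdvr) => //; first exact: Nt_submod.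
move=> i /andP [hi _]; exists 0, (p ^+ t.+1 *: e i); rewrite add0r; split; first exact: sm0.
split => //; first by exists (e i); split => //; apply: e_in_span.
by rewrite scalerA -exprS.
Qed.

Lemma lay_zero K U m (Q : pred 'I_m) x t : is_submod K -> is_submod U ->
  (forall l, Q l -> K (p ^+ t *: x l)) -> sub U (plus K (span Q x)) ->
  rlen (Nt K U t.+1) (Nt K U t) 0.
Proof.
move=> hK hU hQ hUK; apply: rlen0 => z [a [b [ha [[y [hy ->]] ->]]]].
apply: (sub_K_Nt p t.+1 hU); apply: smD => //.
have [kk [s [hkk [[c ->] ->]]]] := hUK y hy.
rewrite scalerDr; apply: smD => //; first by apply: smZ.
rewrite scaler_sumr; apply: smsum => // l hl.
by rewrite scalerA mulrC -scalerA; apply: smZ => //; apply: hQ.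
Qed.

Definition cnt (P : pred 'I_n) t := (\sum_(i | P i && (t < k i)%N) 1)%N.

Lemma part1_gen B K (P : pred 'I_n) m (Q : pred 'I_m) x (Z : nat -> bool) :
  (forall i, (k i <= B)%N) ->
  is_submod K -> sub K (span P e) -> (forall l, Q l -> span P e (x l)) ->
  sub (span P e) (plus K (span Q x)) ->
  (forall t, Z t -> forall l, Q l -> K (p ^+ t *: x l)) ->
  rlen K (span P e) (\sum_(t < B) (if Z t then 0 else minn (\sum_(l | Q l) 1) (cnt P t)))%N.
Proof.
move=> hB hK hKU hxU hUK hZ.
have hU := span_submod P e.
apply: (@rlen_layers R M p K (span P e) B
   (fun t => if Z t then 0%N else minn (\sum_(l | Q l) 1)%N (cnt P t))) => //.
  by move=> y; apply: span_kill.
move=> t _ /=; case hz: (Z t).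
  exact: (lay_zero hK hU (hZ t hz) hUK).
case: (leqP (\sum_(l | Q l) 1)%N (cnt P t)) => hc.
  exact: (lay_gen hdvr (t:=t) hK hU hxU hUK).
exact: lay_e.
Qed.

End DVR4.

End P5.
Import P5.

Module P6.
Set Warnings "-notation-overridden,-ambiguous-paths,-parsing".
Set Implicit Arguments. Unset Strict Implicit. Unset Printing Implicit Defensive.
Import GRing.Theory.
Local Open Scope ring_scope.

Section DVR5.
Variables (R : idomainType) (M : lmodType R) (p : R).
Hypothesis hdvr : forall a : R, a != 0 ->
  exists u v, u \is a GRing.unit /\ a = u * p ^+ v.
Local Notation is_submod := (@Defs.is_submod R M).
Local Notation sub := (@P1.sub R M).
Local Notation plus := (@P1.plus R M).
Local Notation cap := (@P1.cap R M).
Local Notation rlen := (@P1.rlen R M).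
Local Notation between := (@P1.between R M).
Local Notation steps := (@P1.steps R M).
Local Notation step := (@P1.step R M).
Local Notation span := (@P2.span R M).
Local Notation rg := (@P2.rg R M).

Variables (n : nat) (e : 'I_n -> M) (k : 'I_n -> nat).
Hypothesis hk : forall i, p ^+ (k i) *: e i = 0.
Variable B : nat.
Hypothesis hB : forall i, (k i <= B)%N.
Local Notation cnt := (@P5.cnt n k).

Definition T j P := (\sum_(t < B) minn j (cnt P t))%N.

Definition goodC (K U C : M -> Prop) :=
  is_submod C /\ sub C U /\ (forall z, C z -> K z -> z = 0) /\ sub U (plus C K).

Lemma zero_ok K U : is_submod K -> is_submod U -> sub U K -> goodC K U (fun z => z = 0).
Proof.
move=> hK hU hUK; split; first by split => // a x y -> ->; rewrite scaler0 addr0.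
split; first by move=> z ->; apply: sm0.
split; first by move=> z ->.
by move=> y hy; exists 0, y; rewrite add0r; split => //; split => //; apply: hUK.
Qed.

Lemma span_empty m (Q : pred 'I_m) x z : (\sum_(l | Q l) 1)%N = 0%N -> span Q x z -> z = 0.
Proof.
move=> h [c ->]; rewrite big_pred0 // => l; apply/negbTE/negP => Ql.
by move: h; rewrite (bigD1 l Ql).
Qed.

Lemma sum_lt b t0 : (t0 <= b)%N -> (\sum_(t < b) (t < t0)%N)%N = t0.
Proof.
move=> h; transitivity (\sum_(0 <= t < b | (t < t0)%N) 1)%N.
  by rewrite [RHS]big_mkcond [RHS]big_mkord /=; apply: eq_bigr => t _; case: ltnP.
rewrite -(big_nat_widen 0 t0 b xpredT (fun _ => 1%N) h).
by rewrite sum_nat_const_nat subn0 muln1.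
Qed.

Lemma cnt_D1 (P : pred 'I_n) i2 t : P i2 ->
  cnt P t = ((t < k i2)%N + cnt [pred i | P i && (i != i2)] t)%N.
Proof.
move=> h; rewrite /P5.cnt [in LHS]big_mkcondr (bigD1 i2 h) /= -big_mkcondr.
by congr (_ + _)%N; case: (t < k i2)%N.
Qed.

Lemma Tsplit j (P : pred 'I_n) i2 : P i2 -> (forall i, P i -> (k i <= k i2)%N) ->
  T j.+1 P = (T j [pred i | P i && (i != i2)] + k i2)%N.
Proof.
move=> Pi2 hmax; rewrite /T -(sum_lt (hB i2)) -big_split /=.
apply: eq_bigr => t _; rewrite (cnt_D1 t Pi2).
case: ltnP => ht; first by rewrite add1n minnSS addn1.
rewrite add0n addn0.
suff -> : cnt [pred i | P i && (i != i2)] t = 0%N by rewrite !minn0.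
rewrite /P5.cnt big_pred0 // => i /=; apply/negbTE; apply/negP => /andP [/andP [Pi _] hi].
by move: (leq_trans (hmax i Pi) ht); rewrite leqNgt hi.
Qed.

End DVR5.

End P6.
Import P6.

Module P7.
Set Warnings "-notation-overridden,-ambiguous-paths,-parsing".
Set Implicit Arguments. Unset Strict Implicit. Unset Printing Implicit Defensive.
Import GRing.Theory.
Local Open Scope ring_scope.

Section DVR6.
Variables (R : idomainType) (M : lmodType R) (p : R).
Hypothesis hdvr : forall a : R, a != 0 ->
  exists u v, u \is a GRing.unit /\ a = u * p ^+ v.
Local Notation is_submod := (@Defs.is_submod R M).
Local Notation sub := (@P1.sub R M).
Local Notation plus := (@P1.plus R M).
Local Notation cap := (@P1.cap R M).
Local Notation rlen := (@P1.rlen R M).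
Local Notation between := (@P1.between R M).
Local Notation steps := (@P1.steps R M).
Local Notation step := (@P1.step R M).
Local Notation span := (@P2.span R M).
Local Notation rg := (@P2.rg R M).

Variables (n : nat) (e : 'I_n -> M) (k : 'I_n -> nat).
Hypothesis hk : forall i, p ^+ (k i) *: e i = 0.
Variable B : nat.
Hypothesis hB : forall i, (k i <= B)%N.
Local Notation cnt := (@P5.cnt n k).
Local Notation T := (@P6.T n k B).
Local Notation goodC := (@P6.goodC R M).

Theorem part2 j : forall m (Q : pred 'I_m) (x : 'I_m -> M) (P : pred 'I_n) K,
  (\sum_(l | Q l) 1)%N = j -> is_submod K -> sub K (span P e) ->
  (forall l, Q l -> span P e (x l)) -> sub (span P e) (plus K (span Q x)) ->
  (exists S r, between K (span P e) S r /\ (T j P <= steps S r)%N) ->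
  exists C, goodC K (span P e) C.
Proof.
elim: j => [|j IH] m Q x P K hj hK hKU hxU hUK hch.
  exists (fun z => z = 0); apply: zero_ok => //; first exact: span_submod.
  move=> y hy; have [a [b [ha [hb ->]]]] := hUK y hy.
  by rewrite (span_empty hj hb) addr0.
have hU := span_submod P e.
case: (classic (exists i0, P i0 /\ (0 < k i0)%N)) => [[i0 [Pi0 hi0]] | hnone]; last first.
  exists (fun z => z = 0); apply: zero_ok => // y [c ->].
  rewrite big1; first exact: sm0.
  move=> i Pi; have hki : k i = 0%N.
    by apply/eqP; rewrite -leqn0 leqNgt; apply/negP => h; apply: hnone; exists i.
  by have := hk i; rewrite hki expr0 scale1r => ->; rewrite scaler0.
have [i1 Pi1 hmax] : exists2 i1, P i1 & forall i, P i -> (k i <= k i1)%N.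
  by case: (arg_maxnP k Pi0) => i1 Pi1 h; exists i1.
set t0 := k i1.
have ht0 : (0 < t0)%N by apply: leq_trans hi0 (hmax i0 Pi0).
have [S [r [hS hT]]] := hch.
case: (classic (exists l0, Q l0 /\ ~ K (p ^+ t0.-1 *: x l0))) => [[l0 [Ql0 hl0]] | hall]; last first.
  exfalso.
  have hZ : forall t, (t == t0.-1) -> forall l, Q l -> K (p ^+ t *: x l).
    move=> t /eqP -> l Ql; apply: NNPP => hn; apply: hall; exists l; split => //.
  have := part1_gen hdvr hk hB hK hKU hxU hUK hZ hS; rewrite hj => hle.
  have htB : (t0.-1 < B)%N by rewrite prednK // hB.
  move: hT hle; rewrite /P6.T.
  rewrite [X in (X <= _)%N -> _](bigD1 (Ordinal htB)) //=.
  rewrite [X in _ -> (_ <= X)%N -> _](bigD1 (Ordinal htB)) //= eqxx.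
  have E : (\sum_(i < B | i != Ordinal htB) (if (i : nat) == t0.-1 then 0 else minn j.+1 (cnt P i)))%N
     = (\sum_(i < B | i != Ordinal htB) minn j.+1 (cnt P i))%N.
    apply: eq_bigr => t ht; rewrite -(inj_eq val_inj) /= in ht; by rewrite (negbTE ht).
  rewrite E.
  have : (0 < cnt P t0.-1)%N.
    by rewrite /P5.cnt (bigD1 i1) //= Pi1 ltn_predL.
  case: (cnt P t0.-1) => // c _; rewrite minnSS add0n.
  move=> h1 h2; have := leq_trans h1 h2; by rewrite addSn ltnNge leq_addl.
set xx := x l0.
have hxx : span P e xx := hxU l0 Ql0.
have [a hxa] := hxx.
have e1 : p ^+ t0 = p ^+ t0.-1 * p by rewrite -exprSr prednK.
have [i2 [Pi2 [hki2 ua]]] : exists i2, P i2 /\ k i2 = t0 /\ a i2 \is a GRing.unit.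
  apply: NNPP => hn; apply: hl0.
  suff -> : p ^+ t0.-1 *: xx = 0 by apply: sm0.
  rewrite hxa scaler_sumr big1 // => i Pi.
  case: (unit_or_p hdvr (a i)) => [ui | [b hb]].
    have hki : (k i <= t0.-1)%N.
      rewrite -ltnS prednK // ltn_neqAle hmax // andbT.
      by apply/negP => /eqP hki; apply: hn; exists i.
    by rewrite scalerA mulrC -scalerA (kill hk hki) scaler0.
  by rewrite hb scalerA mulrCA -e1 -scalerA (kill hk (hmax i Pi)) scaler0.
set P' := [pred i | P i && (i != i2)].
have hU' := span_submod P' e.
have hU'U : sub (span P' e) (span P e).
  by apply: span_subset => i /andP [].
have hsplit : forall y, span P e y -> exists c y', span P' e y' /\ y = c *: xx + y'.
  move=> y [b ->]; set c := b i2 / a i2.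
  exists c, (\sum_(i | P' i) (b i - c * a i) *: e i); split; first by exists (fun i => b i - c * a i).
  rewrite hxa (bigD1 i2 Pi2) [X in _ = _ *: X + _](bigD1 i2 Pi2) /=.
  rewrite scalerDr scaler_sumr scalerA divrK // -addrA; congr (_ + _).
  rewrite -big_split /=; apply: eq_bigr => i _.
  by rewrite scalerA -scalerDl addrC subrK.
have hxxK : p ^+ t0 *: xx = 0 by apply: (span_kill hk hmax hxx).
have hRK : forall c, K (c *: xx) -> c *: xx = 0.
  move=> c hc; case: (eqVneq c 0) => [->|cn0]; first by rewrite scale0r.
  have [u [v [uu huv]]] := hdvr cn0.
  case: (leqP t0 v) => hv.
    by rewrite huv -scalerA -(subnK hv) exprD -scalerA hxxK !scaler0.
  exfalso; apply: hl0.
  have := smZ (u^-1 * p ^+ (t0.-1 - v)) hK hc; rewrite scalerA huv mulrACA mulVr // mul1r.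
  by rewrite -exprD subnK // -ltnS prednK.
set D := plus K (rg xx).
have hD : is_submod D by apply: plus_submod => //; apply: rg_submod.
have hDU : sub D (span P e).
  move=> z [a' [b' [ha' [[c ->] ->]]]]; apply: smD => //; first exact: hKU.
  exact: smZ.
have hKD : sub K D by apply: sub_plusl; apply: rg_submod.
have hxD : forall c, D (c *: xx) by move=> c; apply: sub_plusr => //; exists c.
set K' := cap D (span P' e).
set S2 := fun i => cap (plus (S i) D) (span P' e).
have [h1 h2] := hS.
have hS2 : between K' (span P' e) S2 r.
  split.
    move=> i hi; have [hSi [hKSi hSiU]] := h1 i hi; split.
      by apply: cap_submod => //; apply: plus_submod.
    split; last by move=> z [].
    by move=> z [hzD hzU']; split => //; apply: sub_plusr.
  move=> i hi z [[s [d [hs [hd ->]]]] hz]; split => //.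
  by exists s, d; split => //; apply: h2.
have hlenD : rlen K D t0 by apply: (rlen_cyc hdvr hK); rewrite hxxK; apply: sm0.
have hsteps : (steps S r <= t0 + steps S2 r)%N.
  apply: leq_trans (steps_le (S1 := fun i => cap (S i) D) (S2 := fun i => plus (S i) D) _) _.
    by move=> i hi; apply: (step_split hD hS).
  apply: leq_add.
    apply: hlenD; split.
      move=> i hi; have [hSi [hKSi hSiU]] := h1 i hi; split; first exact: cap_submod.
      by split => z; [split; auto | case].
    by move=> i hi z [hz hd]; split => //; apply: h2.
  apply: steps_mono => i hi [z [hz hnz]].
  have hzU : span P e z.
    by case: hz => s [d [hs [hd ->]]]; apply: smD => //; [have [_ [_ ?]] := h1 i.+1 hi; auto | auto].
  have [c [y' [hy' hze]]] := hsplit z hzU.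
  exists y'; split.
    split => //; case: hz => s [d [hs [hd hzsd]]]; exists s, (d - c *: xx).
    split => //; split; first by apply: smB.
    by rewrite addrA -hzsd hze addrC addKr.
  move=> [hy'S _]; apply: hnz.
  have [hSi _] := h1 i (ltnW hi).
  rewrite hze addrC; apply: smD => //; first by apply: plus_submod.
  by apply: sub_plusr.
have hmax' : forall i, P i -> (k i <= k i2)%N by rewrite hki2.
have hT' : (T j P' <= steps S2 r)%N.
  have := Tsplit hB j Pi2 hmax'; rewrite hki2 => hTs.
  by move: (leq_trans hT hsteps); rewrite hTs addnC leq_add2l.
have [x' hx'] : exists x' : 'I_m -> M, forall l, Q l ->
    span P' e (x' l) /\ exists c, x l = c *: xx + x' l.
  apply: (@fin_all_exists _ (fun _ => M)
    (fun l y' => Q l -> span P' e y' /\ exists c, x l = c *: xx + y')) => l.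
  case: (boolP (Q l)) => hl; last by exists 0.
  have [c [y' [hy' he]]] := hsplit (x l) (hxU l hl).
  by exists y' => _; split => //; exists c.
set Q' := [pred l | Q l && (l != l0)].
have hj' : (\sum_(l | Q' l) 1)%N = j by move: hj; rewrite (bigD1 l0 Ql0) /= add1n => -[].
have hK' : is_submod K' := cap_submod hD hU'.
have hx'U : forall l, Q' l -> span P' e (x' l) by move=> l /andP [hl _]; case: (hx' l hl).
have hU'K' : sub (span P' e) (plus K' (span Q' x')).
  move=> y hy; have [kk [s [hkk [[b hs] hys]]]] := hUK y (hU'U y hy).
  set w := \sum_(l | Q' l) b l *: x' l.
  exists (y - w), w; split; last by split; [exists b | rewrite subrK].
  split; last first.
    apply: smB => //; apply: smsum => // l hl; apply: smZ => //; exact: hx'U.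
  rewrite hys -addrA; apply: smD => //; first exact: hKD.
  rewrite hs (bigD1 l0 Ql0) /= -addrA; apply: smD => //.
  rewrite /w -sumrB; apply: smsum => // l hl.
  have [_ [c hc]] := hx' l (andP hl).1.
  by rewrite -scalerBr hc addrK scalerA; apply: hxD.
have [C' [hC' [hC'U [hC'K hU'C]]]] := IH m Q' x' P' K' hj' hK' (fun z h => proj2 h)
   hx'U hU'K' (ex_intro _ S2 (ex_intro _ r (conj hS2 hT'))).
exists (plus (rg xx) C'); split; first by apply: plus_submod => //; apply: rg_submod.
split.
  move=> z [a' [c' [[c ->] [hc' ->]]]]; apply: smD => //; first exact: smZ.
  exact: hU'U (hC'U _ hc').
split.
  move=> z [a' [c' [[c hac] [hc' hz]]]] hzK.
  have hc'K' : K' c'.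
    split; last exact: hC'U.
    have -> : c' = z - a' by rewrite hz addrC addKr.
    by apply: smB => //; [exact: hKD | rewrite hac; exact: hxD].
  have c'0 := hC'K c' hc' hc'K'.
  move: hzK; rewrite hz c'0 addr0 hac => hK0; exact: hRK.
move=> y hy; have [c [y' [hy' hye]]] := hsplit y hy.
have [c' [k' [hc' [[[kk [d [hkk [[s hd] hk'e]]]] hk'U] hy'e]]]] := hU'C y' hy'.
exists ((c + s) *: xx + c'), kk; split.
  by exists ((c + s) *: xx), c'; split; [exists (c + s) | split].
split => //; rewrite hye hy'e hk'e hd scalerDl.
by rewrite !addrA addrAC [c *: xx + c' + _]addrAC.
Qed.

End DVR6.

End P7.
Import P7.

Module P8.
Set Warnings "-notation-overridden,-ambiguous-paths,-parsing".
Set Implicit Arguments. Unset Strict Implicit. Unset Printing Implicit Defensive.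
Import GRing.Theory.
Local Open Scope ring_scope.

Lemma count_lt n j : (j <= n)%N -> (\sum_(i < n | (i < j)%N) 1)%N = j.
Proof.
move=> h; rewrite -(big_mkord (fun i => (i < j)%N) (fun _ => 1%N)).
rewrite -(big_nat_widen 0 j n xpredT (fun _ => 1%N) h).
by rewrite sum_nat_const_nat subn0 muln1.
Qed.

Lemma Tsorted n (k : 'I_n -> nat) j B :
  (forall i i' : 'I_n, (i <= i')%N -> (k i' <= k i)%N) -> (j <= n)%N ->
  (forall i, (k i <= B)%N) ->
  (\sum_(t < B) minn j (\sum_(i | predT i && (t < k i)%N) 1))%N =
  (\sum_(i < n | (i < j)%N) k i)%N.
Proof.
move=> hk hjn hB.
have cj := count_lt hjn.
have step : forall t, minn j (\sum_(i | predT i && (t < k i)%N) 1)%N =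
    (\sum_(i < n | (i < j)%N) (t < k i)%N)%N.
  move=> t.
  case: (classic (exists i0 : 'I_n, (i0 < j)%N /\ (k i0 <= t)%N)) => [[i0 [hi0 hki0]] | hno].
    have imp : forall i : 'I_n, (t < k i)%N -> (i < j)%N.
      move=> i hi; rewrite ltnNge; apply/negP => hji.
      have := hk i0 i (ltnW (leq_trans hi0 hji)).
      by move=> h; move: (leq_trans h hki0); rewrite leqNgt hi.
    have E : (\sum_(i | predT i && (t < k i)%N) 1)%N = (\sum_(i < n | (i < j)%N) (t < k i)%N)%N.
      rewrite big_mkcond [RHS]big_mkcond /=; apply: eq_bigr => i _.
      by case: (ltnP t (k i)) => h; [rewrite (imp i h) | case: (i < j)%N].
    rewrite E; apply/minn_idPr; rewrite -[X in (_ <= X)%N]cj.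
    by apply: leq_sum => i _; apply: leq_b1.
  have hall : forall i : 'I_n, (i < j)%N -> (t < k i)%N.
    by move=> i hi; rewrite ltnNge; apply/negP => h; apply: hno; exists i.
  have E : (\sum_(i < n | (i < j)%N) (t < k i)%N)%N = j.
    by rewrite -[RHS]cj; apply: eq_bigr => i hi; rewrite hall.
  rewrite E; apply/minn_idPl; rewrite -[X in (X <= _)%N]E.
  rewrite big_mkcond [X in (_ <= X)%N]big_mkcond /=; apply: leq_sum => i _.
  by case: (i < j)%N; case: (t < k i)%N.
rewrite (eq_bigr (fun t : 'I_B => (\sum_(i < n | (i < j)%N) (t < k i)%N)%N)); last first.
  by move=> t _; apply: step.
rewrite exchange_big /=.
by apply: eq_bigr => i _; apply: sum_lt.
Qed.


End P8.
Import P8.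

Theorem lemma4p6 (R : idomainType) (hR : is_dvr R)
    (M N : lmodType R) (n : nat) (k : 'I_n -> nat)
    (hk : forall i i' : 'I_n, (i <= i')%N -> (k i' <= k i)%N)
    (hM : is_sum_of_cyclics M (@max_ideal R) k)
    (f : {linear M -> N}) (hf : forall y : N, exists x : M, f x = y)
    (j : nat) (hjn : (j <= n)%N) (hN : generated_by N j) :
  length_le N (\sum_(i < n | (i < j)%N) k i) /\
  (has_length N (\sum_(i < n | (i < j)%N) k i) -> quotient_is_summand f).
Proof.
have [p [pn0 [pnu hp]]] := hR.
have [e [espan erel]] := hM.
have hke : forall i, p ^+ (k i) *: e i = 0.
  move=> i; have <- : \sum_(i' < n) (if i' == i then p ^+ k i else 0) *: e i' = p ^+ (k i) *: e i.
    rewrite (bigD1 i) //= eqxx big1 ?addr0 // => l /negbTE ->; by rewrite scale0r.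
  apply/(erel _).2 => i'; case: eqP => [->|_]; last first.
    by exists [::]; split => //; rewrite big_nil.
  exists [:: (1, [tuple of nseq (k i) p])]; split.
    move=> t; rewrite inE => /eqP -> r /=; rewrite mem_nseq => /andP [_ /eqP ->].
    exact: pnu.
  rewrite big_seq1 /= mul1r big_nseq; elim: (k i) => [|c IH] /=; first by rewrite expr0.
  by rewrite -IH exprS.
set K := fun x : M => f x = 0.
have hK : is_submod K.
  split; first by rewrite /K linear0.
  move=> a x y hx hy; rewrite /K in hx hy *; by rewrite linearD linearZ /= hx hy scaler0 addr0.
have hU := span_submod (fun _ : 'I_n => true) e.
have hUall : forall x, P2.span (fun _ : 'I_n => true) e x.
  by move=> x; have [a ->] := espan x; exists a.
have [g hg] := hN.
have [xs hxs] : exists xs : 'I_j -> M, forall l, f (xs l) = g l.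
  by apply: (@fin_all_exists _ (fun _ => M) (fun l x => f x = g l)) => l; apply: hf.
set B := (\sum_(i < n) k i)%N.
have hB : forall i, (k i <= B)%N.
  by move=> i; rewrite /B (bigD1 i) //= leq_addr.
have hKU : P1.sub K (P2.span (fun _ : 'I_n => true) e) by move=> x _.
have hxU : forall l : 'I_j, (fun _ => true) l -> P2.span (fun _ : 'I_n => true) e (xs l).
  by move=> l _.
have hUK : P1.sub (P2.span (fun _ : 'I_n => true) e) (plus K (P2.span (fun _ : 'I_j => true) xs)).
  move=> x _; have [a ha] := hg (f x).
  exists (x - \sum_(l < j) a l *: xs l), (\sum_(l < j) a l *: xs l); split.
    rewrite /K linearB linear_sum ha; apply/eqP; rewrite subr_eq0; apply/eqP.
    by apply: eq_bigr => l _; rewrite linearZ hxs.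
  by split; [exists a | rewrite subrK].
have hj : (\sum_(l < j | (fun _ => true) l) 1)%N = j by rewrite sum1_card card_ord.
have hT : P6.T k B j (fun _ : 'I_n => true) = (\sum_(i < n | (i < j)%N) k i)%N.
  by rewrite /P6.T /P5.cnt; apply: Tsorted.
have pull : forall S r, submod_chain S r ->
    between K (P2.span (fun _ : 'I_n => true) e) (fun i x => S i (f x)) r /\
    steps (fun i x => S i (f x)) r = r.
  move=> S r [hsub hstr]; split.
    split.
      move=> i hi; have [h0 hS] := hsub i hi; split.
        split; first by rewrite linear0.
        by move=> a x y hx hy; rewrite linearD linearZ; apply: hS.
      by split => x //; rewrite /K => ->.
    by move=> i hi x hx; apply: (hstr i hi).1.
  rewrite /steps -[RHS](card_ord r) -sum1_card; apply: eq_bigr => i _.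
  have [_ [y [hy hny]]] := hstr i (ltn_ord i).
  case: sbP => // hn; exfalso; apply: hn; have [x hx] := hf y.
  by exists x; rewrite hx.
split.
  move=> S r hS; have [hb hst] := pull S r hS.
  rewrite -hst -hT; rewrite /P6.T.
  have := part1_gen hp hke hB hK hKU hxU hUK (Z := xpred0) _ hb.
  rewrite hj; apply => //.
move=> [_ [S hS]]; have [hb hst] := pull S _ hS.
have [C [hC [hCU [hCK hUC]]]] := part2 hp hke hB hj hK hKU hxU hUK
  (ex_intro _ _ (ex_intro _ _ (conj hb (eq_leq (esym (etrans hst (esym hT))))))).
exists C; split => //; split; first by move=> x hx hfx; apply: hCK.
move=> x; have [c [y [hc [hy ->]]]] := hUC x (hUall x).
by exists c, y.
Qed.
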